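(* Let $G$ be a finite graph, let $\lambda>0$, $\beta \in [0,\infty]$ and set $p=1-e^{-\beta}$. Then for every integer $k\ge1$, \[ Z_k({G,\lambda,\beta}) = \mathbb{E}\, Z({G_p,\lambda})^k .\]
   Context: For a finite graph $G=(V,E)$ and $I\subset V$, $E(I):=\{e\in E: e\subset I\}$. For $\lambda>0$, $\beta\in[0,\infty]$ and $k\ge1$, \[ Z_k(G,\lambda,\beta) := \sum_{I_1,\dots,I_k \subset V} \lambda^{|I_1|+\cdots+|I_k|} e^{-\beta |E(I_1) \cup \cdots \cup E(I_k)|}, \] with the convention $e^{-\infty\cdot 0}=1$ and $e^{-\infty\cdot n}=0$ for $n\ge1$. $G_p$ is the random spanning subgraph of $G$ keeping each edge independently with probability $p$, and $Z(H,\lambda):=\sum_I\lambda^{|I|}$ over independent sets $I$ of $H$ (including the empty set). *)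

(* Defs.v *)
From HB Require Import structures.
From mathcomp Require Import all_boot all_order all_algebra.
From mathcomp Require Import all_classical all_reals all_analysis.
Set Implicit Arguments. Unset Strict Implicit. Unset Printing Implicit Defensive.
Import Order.TTheory GRing.Theory Num.Theory.
Local Open Scope ring_scope.

Definition simple_graph (V : finType) (E : {set {set V}}) : Prop :=
  forall e, e \in E -> #|e| = 2%N.

Definition Eind (V : finType) (E : {set {set V}}) (I : {set V}) : {set {set V}} :=
  [set e in E | e \subset I].

Definition expNe (R : realType) (beta : \bar R) : R :=
  match beta with
  | EFin b => expR (- b)
  | +oo%E => 0
  | -oo%E => 0 (* irrelevant: beta >= 0 is assumed *)
  end.

(* e^{-beta n} with the conventions e^{-oo*0} = 1, e^{-oo*n} = 0 (n >= 1). *)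
Definition expNe_mul (R : realType) (beta : \bar R) (n : nat) : R :=
  expNe beta ^+ n.

Definition Zk (R : realType) (V : finType) (E : {set {set V}}) (lambda : R)
  (beta : \bar R) (k : nat) : R :=
  \sum_(I : {ffun 'I_k -> {set V}})
     lambda ^+ (\sum_(j < k) #|I j|)%N
     * expNe_mul beta #|\bigcup_(j < k) Eind E (I j)|.

Definition independent (V : finType) (F : {set {set V}}) (I : {set V}) : bool :=
  [forall e in F, ~~ (e \subset I)].

Definition Zind (R : realType) (V : finType) (F : {set {set V}}) (lambda : R) : R :=
  \sum_(I : {set V} | independent F I) lambda ^+ #|I|.

(* Law of G_p: the spanning subgraph (V, F), F subset E, has probability
   p^|F| (1-p)^|E \ F|. *)
Definition Gp_prob (R : realType) (V : finType) (E : {set {set V}}) (p : R)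
  (F : {set {set V}}) : R :=
  p ^+ #|F| * (1 - p) ^+ #|E :\: F|.

Definition expect_Gp (R : realType) (V : finType) (E : {set {set V}}) (p : R)
  (f : {set {set V}} -> R) : R :=
  \sum_(F in powerset E) Gp_prob E p F * f F.

(* Main.v *)
Require Import Defs.
From HB Require Import structures.
From mathcomp Require Import all_boot all_order all_algebra.
From mathcomp Require Import all_classical all_reals all_analysis.
From mathcomp Require Import zify.
Import Order.TTheory GRing.Theory Num.Theory.
Local Open Scope ring_scope.

Lemma binom_sets (R : comNzRingType) (T : finType) (S : {set T}) (p q : R) :
  \sum_(J in powerset S) p ^+ #|J| * q ^+ #|S :\: J| = (p + q) ^+ #|S|.
Proof.
have := @bigA_distr R 0 1 *%R +%R T (fun e : T => if e \in S then p else 0)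
                   (fun e : T => if e \in S then q else 1).
have -> : \prod_(i : T) ((if i \in S then p else 0) + (if i \in S then q else 1))
          = \prod_(i : T) (if i \in S then p + q else 1).
  by apply: eq_bigr => i _; case: (i \in S); rewrite ?add0r.
rewrite -big_mkcond prodr_const => ->.
rewrite [LHS]big_mkcond; apply: eq_bigr => J _.
rewrite powersetE; case: (boolP (J \subset S)) => JS.
  rewrite (eq_bigr (fun i => (if i \in J then p else 1) * (if i \in S :\: J then q else 1))).
    by rewrite big_split /= -!big_mkcond /= !prodr_const.
  move=> i _; rewrite !inE; case: (boolP (i \in J)) => iJ /=.
    by rewrite (fintype.subsetP JS i iJ) mulr1.
  by rewrite mul1r.
case/subsetPn: JS => e eJ eS.
by rewrite (bigD1 e) //= eJ (negbTE eS) mul0r.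
Qed.

Lemma cond_sum (R : realType) (V : finType) (E U : {set {set V}}) (q : R) :
  U \subset E ->
  \sum_(F in powerset E | F :&: U == finset.set0) Gp_prob E (1 - q) F = q ^+ #|U|.
Proof.
move=> UE.
rewrite (eq_bigl (fun F => F \in powerset (E :\: U))); last first.
  by move=> F; rewrite !powersetE subsetD setI_eq0.
rewrite (eq_bigr (fun F : {set {set V}} => q ^+ #|U| * ((1 - q) ^+ #|F| * q ^+ #|(E :\: U) :\: F|))).
  by rewrite -big_distrr /= binom_sets subrK expr1n mulr1.
move=> F; rewrite powersetE => FEU.
have FE := fintype.subset_trans FEU (subsetDl E U).
have Hc : #|E :\: F| = (#|U| + #|E :\: U :\: F|)%N.
  rewrite !cardsD (finset.setIidPr FE) (finset.setIidPr FEU) (finset.setIidPr UE).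
  have h1 := subset_leq_card FEU.
  have h2 := subset_leq_card UE.
  rewrite cardsD (finset.setIidPr UE) in h1.
  lia.
have Hq : 1 - (1 - q) = q by rewrite opprB addrCA subrr addr0.
by rewrite /Gp_prob Hq Hc exprD mulrCA.
Qed.

Theorem proposition1p7 (R : realType) (V : finType) (E : {set {set V}})
  (lambda : R) (beta : \bar R) (k : nat) :
  simple_graph E -> 0 < lambda -> (0 <= beta)%E -> (1 <= k)%N ->
  let p := 1 - expNe beta in
  Zk E lambda beta k = expect_Gp E p (fun F => Zind F lambda ^+ k).
Proof.
move=> _ _ _ _ p; rewrite /p /Zk /expect_Gp; set q := expNe beta.
have E1 : forall F, Zind F lambda ^+ k =
   \sum_(g : {ffun 'I_k -> {set V}})
      \prod_(j < k) (if independent F (g j) then lambda ^+ #|g j| else 0).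
  move=> F; rewrite -[in LHS](card_ord k) -prodr_const /Zind.
  under eq_bigr do rewrite big_mkcond.
  by rewrite bigA_distr_bigA.
under [RHS]eq_bigr do rewrite E1 big_distrr.
rewrite [RHS]exchange_big /=; apply: eq_bigr => g _.
set U := \bigcup_(j < k) Eind E (g j).
have UE : U \subset E.
  by apply/bigcupsP => j _; apply/fintype.subsetP => e; rewrite inE => /andP[].
have E2 : forall F, F \in powerset E ->
  \prod_(j < k) (if independent F (g j) then lambda ^+ #|g j| else 0)
  = if F :&: U == finset.set0 then lambda ^+ (\sum_(j < k) #|g j|)%N else 0.
  move=> F; rewrite powersetE => FE.
  have -> : (F :&: U == finset.set0) = [forall j, independent F (g j)].
    apply/idP/idP.
      move/eqP/setP => H; apply/forallP => j; apply/forallP => e.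
      apply/implyP => eF; apply/negP => esub.
      move: (H e); rewrite inE finset.in_set0 eF /= => /negP; apply.
      by apply/bigcupP; exists j => //; rewrite inE (fintype.subsetP FE e eF) esub.
    move=> H; apply/eqP/setP => e; rewrite !inE; apply/negP.
    move=> /andP[eF /bigcupP[j _]]; rewrite inE => /andP[eE esub].
    by have := forallP H j; rewrite /independent => /forallP /(_ e); rewrite eF esub.
  case: (boolP [forall j, independent F (g j)]) => H.
    rewrite -prodrXr; apply: eq_bigr => j _; by rewrite (forallP H j).
  case/forallPn: H => j Hj.
  by rewrite (bigD1 j) //= (negbTE Hj) mul0r.
rewrite (eq_bigr (fun F => Gp_prob E (1 - q) F *
   (if F :&: U == finset.set0 then lambda ^+ (\sum_(j < k) #|g j|)%N else 0))); last first.
  by move=> F HF; rewrite E2.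
have Hsw : forall c (P L : R), P * (if c then L else 0) = L * (if c then P else 0).
  by move=> c P L; case: c; rewrite ?mulr0 // mulrC.
under [RHS]eq_bigr do rewrite Hsw.
rewrite -big_distrr /= -big_mkcondr cond_sum //.
Qed.
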